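(* Let $|\!|\!|\cdot|\!|\!|\in \mathbf{N}_{X^n}$ and $x:=(x_1,\ldots,x_n)\in X^n$. Then (i) $\max\{|\!|\!|(0_X,x_2,\ldots,x_n)|\!|\!|,\ldots,|\!|\!|(x_1,\ldots,x_{n-1},0_X)|\!|\!|\}\le |\!|\!|x|\!|\!|$; (ii) $|\!|\!|(x_1,0_X,\ldots,0_X)|\!|\!|\le |\!|\!|(x_1,x_2,0_X,\ldots,0_X)|\!|\!|\le\ldots\le|\!|\!|(x_1,\ldots,x_{n-1},0_X)|\!|\!|\le|\!|\!|x|\!|\!|$; (iii) $|\!|\!|x|\!|\!|_{\infty}\le |\!|\!|x|\!|\!|\le|\!|\!|x|\!|\!|_1 \le n\cdot |\!|\!|x|\!|\!|_\infty$, where $|\!|\!|x|\!|\!|_1:=\|x_1\|+\ldots+\|x_n\|$ and $|\!|\!|x|\!|\!|_\infty:=\max\{\|x_1\|,\ldots,\|x_n\|\}$.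
   Context: Let $(X,\|\cdot\|)$ be a normed vector space and $n\ge 2$. $\mathbf{N}_{X^n}$ denotes the family of all norms $|\!|\!|\cdot|\!|\!|$ on $X^n$ satisfying (A1) sign-symmetry: $|\!|\!|(x_1,\ldots,x_n)|\!|\!|=|\!|\!|(\pm x_1,\ldots,\pm x_n)|\!|\!|$ for all $(x_1,\ldots,x_n)\in X^n$ and all choices of signs; and (A2) compatibility: $|\!|\!|(0_X,\ldots,0_X,v,0_X,\ldots,0_X)|\!|\!|=\|v\|$ for all $v\in X$, with $v$ in the $i$th position, for each $i=1,\ldots,n$. *)

(* Defs.v *)
From HB Require Import structures.
From mathcomp Require Import all_boot all_order all_algebra.
From mathcomp Require Import all_classical all_reals all_analysis.
Set Implicit Arguments. Unset Strict Implicit. Unset Printing Implicit Defensive.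
Import Order.TTheory GRing.Theory Num.Theory.
Local Open Scope ring_scope.

Definition is_norm_prod (R : realType) (X : normedModType R) (n : nat)
  (N : ('I_n -> X) -> R) : Prop :=
  [/\ (forall x : 'I_n -> X, N x = 0 -> forall i, x i = 0),
      (forall (a : R) (x : 'I_n -> X), N (fun i => a *: x i) = `|a| * N x) &
      (forall x y : 'I_n -> X, N (fun i => x i + y i) <= N x + N y)].

Definition sign_symmetric (R : realType) (X : normedModType R) (n : nat)
  (N : ('I_n -> X) -> R) : Prop :=
  forall (x : 'I_n -> X) (s : 'I_n -> bool),
    N (fun i => if s i then - x i else x i) = N x.

Definition compatible (R : realType) (X : normedModType R) (n : nat)
  (N : ('I_n -> X) -> R) : Prop :=
  forall (i : 'I_n) (v : X), N (fun j => if j == i then v else 0) = `|v|.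

Definition in_NXn (R : realType) (X : normedModType R) (n : nat)
  (N : ('I_n -> X) -> R) : Prop :=
  [/\ is_norm_prod N, sign_symmetric N & compatible N].

Definition zero_at (X : zmodType) (n : nat) (i : 'I_n) (x : 'I_n -> X) : 'I_n -> X :=
  fun j => if j == i then 0 else x j.

Definition trunc (X : zmodType) (n k : nat) (x : 'I_n -> X) : 'I_n -> X :=
  fun j => if (j < k)%N then x j else 0.

Definition norm1 (R : realType) (X : normedModType R) (n : nat) (x : 'I_n -> X) : R :=
  \sum_(i < n) `|x i|.

Definition norminf (R : realType) (X : normedModType R) (n : nat) (x : 'I_n -> X) : R :=
  \big[Num.max/0]_(i < n) `|x i|.

(* Main.v *)
Require Import Defs.
From HB Require Import structures.
From mathcomp Require Import all_boot all_order all_algebra.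
From mathcomp Require Import all_classical all_reals all_analysis.
From mathcomp Require Import lra.
Import Order.TTheory GRing.Theory Num.Theory.
Local Open Scope ring_scope.

Section Aux.
Variables (R : realType) (X : normedModType R) (n : nat) (N : ('I_n -> X) -> R).
Hypothesis hN : in_NXn N.

Lemma N0 : N (fun _ => 0) = 0.
Proof.
case: hN => -[_ hZ _] _ _.
have := hZ 0 (fun _ => 0); rewrite normr0 mul0r => <-.
by congr N; apply: funext => i; rewrite scaler0.
Qed.

Lemma N_ge0 x : 0 <= N x.
Proof.
case: hN => -[_ hZ hT] hS _.
have h := hT x (fun i => -1 *: x i).
rewrite hZ normrN normr1 mul1r in h.
have e : (fun i => x i + -1 *: x i) = (fun _ => 0).
  by apply: funext => i; rewrite scaleN1r subrr.
rewrite e N0 in h. lra.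
Qed.

Lemma N_mask (m : 'I_n -> bool) x :
  N (fun j => if m j then x j else 0) <= N x.
Proof.
case: hN => -[_ hZ hT] hS _.
have e : (fun j => if m j then x j else 0) =
   (fun j => (2^-1 : R) *: (x j + (if ~~ m j then - x j else x j))).
  apply: funext => j; case: (m j) => /=; last by rewrite subrr scaler0.
  by rewrite -[x j + x j]/(x j *+ 2) -(scaler_nat 2 (x j)) scalerA mulVf ?scale1r // pnatr_eq0.
rewrite e hZ.
have := hT x (fun j => if ~~ m j then - x j else x j).
rewrite hS ger0_norm ?invr_ge0 ?ler0n // => h.
have h2 := N_ge0 x.
have : 0 <= (2^-1 : R) <= 1 by rewrite invr_ge0 ler0n /= invf_le1 ?ler1n ?ltr0n.
set c := (2^-1 : R). have -> : c = 1/2 by rewrite /c div1r.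
move=> _; lra.
Qed.

Lemma N_sum (I : Type) (r : seq I) (f : I -> 'I_n -> X) :
  N (fun j => \sum_(i <- r) f i j) <= \sum_(i <- r) N (f i).
Proof.
case: hN => -[_ hZ hT] hS _.
elim: r => [|a r IH].
  rewrite big_nil.
  have -> : (fun j => \sum_(i <- [::]) f i j) = (fun _ => 0).
    by apply: funext => j; rewrite big_nil.
  by rewrite N0.
rewrite big_cons.
have -> : (fun j => \sum_(i <- a :: r) f i j) =
  (fun j => f a j + (fun j => \sum_(i <- r) f i j) j).
  by apply: funext => j; rewrite big_cons.
apply: le_trans (hT _ _) _; exact: lerD.
Qed.

End Aux.

Theorem proposition2p3 (R : realType) (X : normedModType R) (n : nat)
  (hn : (2 <= n)%N) (N : ('I_n -> X) -> R) (hN : in_NXn N) (x : 'I_n -> X) :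
  [/\ (* (i) *) \big[Num.max/0]_(i < n) N (zero_at i x) <= N x,
      (* (ii) *) (forall k : nat, (0 < k)%N -> (k < n)%N ->
                   N (trunc k x) <= N (trunc k.+1 x)) /\ N (trunc n.-1 x) <= N x &
      (* (iii) *) [/\ norminf x <= N x, N x <= norm1 x & norm1 x <= n%:R * norminf x]].
Proof.
have hmask := @N_mask _ _ _ _ hN.
have hC : compatible N by case: hN.
have single : forall i, `|x i| <= N x.
  move=> i; rewrite -(hC i).
  have -> : (fun j => if j == i then x i else 0) =
            (fun j => if j == i then x j else 0).
    by apply: funext => j; case: eqP => // ->.
  exact: hmask.
split.
- apply: bigmax_le; first exact: @N_ge0 _ _ _ _ hN x.
  move=> i _; rewrite /zero_at.
  have -> : (fun j => if j == i then 0 else x j) =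
            (fun j => if j != i then x j else 0).
    by apply: funext => j; case: (j == i).
  exact: hmask.
- split.
  + move=> k _ hk.
    have -> : trunc k x = (fun j => if j != Ordinal hk then trunc k.+1 x j else 0).
      apply: funext => j; rewrite /trunc -val_eqE /= ltnS.
      by case: (ltngtP j k) => //= _; rewrite ltnn.
    exact: hmask.
  + rewrite /trunc; exact: hmask (fun j => (j < n.-1)%N) x.
- split.
  + apply: bigmax_le; first exact: @N_ge0 _ _ _ _ hN x.
    by move=> i _; exact: single.
  + rewrite /norm1.
    have ex : x = (fun j => \sum_(i < n) (fun j => if j == i then x i else 0) j).
      apply: funext => j; rewrite (bigD1 j) //= eqxx big1 ?addr0 //.
      by move=> i /negbTE; rewrite eq_sym => ->.
    rewrite {1}ex.
    apply: le_trans (@N_sum _ _ _ _ hN _ (index_enum 'I_n) (fun i j => if j == i then x i else 0)) _.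
    apply: ler_sum => i _; by rewrite (hC i).
  + rewrite /norm1 /norminf.
    set M := \big[Num.max/0]_(i < n) `|x i|.
    have h : forall i : 'I_n, `|x i| <= M.
      by move=> i; rewrite /M; exact: (le_bigmax 0 (fun i : 'I_n => `|x i|) i).
    have hs : \sum_(i < n) `|x i| <= \sum_(i < n) M by apply: ler_sum => i _; exact: h.
    by rewrite mulr_natl; rewrite sumr_const card_ord in hs.
Qed.
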